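(* Let $G$ be a connected simple graph (finite or infinite) with $C_G<\infty$. Then the set $DM(G)=\{\mu:\mu\text{ doubling measure on } G,\ C_\mu=C_G\}$ is a non-empty convex cone.
   Context: $G$ carries the shortest-path distance $d_G$. A measure on $G$ is a weight function $\mu:V_G\to(0,\infty)$, with $\mu(A)=\sum_{v\in A}\mu(v)$. Closed balls: $B(x,r)=\{y:d_G(x,y)\le r\}$. The doubling constant is $C_\mu=\sup\{\mu(B(x,2k+1))/\mu(B(x,k)):x\in V_G,\ k\in\{0,1,2,\dots\}\}$ (equivalently $\sup_{x,r>0}\mu(B^o(x,2r))/\mu(B^o(x,r))$ with open balls); $\mu$ is doubling if $C_\mu<\infty$, and $C_G=\inf\{C_\mu:\mu\text{ doubling on }G\}$. *)

(* Defs.v *)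
From HB Require Import structures.
From mathcomp Require Import all_boot all_order all_algebra.
From mathcomp Require Import all_classical all_reals.
From mathcomp Require Import ereal esum.
Set Implicit Arguments. Unset Strict Implicit. Unset Printing Implicit Defensive.
Import Order.TTheory GRing.Theory Num.Theory.
Local Open Scope classical_set_scope.
Local Open Scope ring_scope.

Section Graph.
Variable V : Type.
Variable adj : V -> V -> Prop.

Definition simple_graph : Prop :=
  (forall x y, adj x y -> adj y x) /\ (forall x, ~ adj x x).

Inductive walk : nat -> V -> V -> Prop :=
| walk0 x : walk 0 x x
| walkS n x z y : adj x z -> walk n z y -> walk n.+1 x y.

Definition connected_graph : Prop := forall x y, exists n, walk n x y.

Definition gdist (x y : V) : nat :=
  xget 0%N [set n | walk n x y /\ forall m, walk m x y -> (n <= m)%N].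

Definition gball (x : V) (r : nat) : set V := [set y | (gdist x y <= r)%N].

Variable R : realType.

Definition gmeasure (mu : V -> R) (A : set V) : \bar R :=
  esum (A : set {classic V}) (fun v => (mu v)%:E).

Definition is_measure (mu : V -> R) : Prop := forall v, 0 < mu v.

Definition doubling_const (mu : V -> R) : \bar R :=
  ereal_sup [set ((fine (gmeasure mu (gball x (2 * k).+1)))
                  / (fine (gmeasure mu (gball x k))))%:E
            | x in [set: V] & k in [set: nat]].

(* mu is doubling: a measure, whose balls have finite measure
   (so that the ratios are real numbers), and C_mu < oo *)
Definition doubling (mu : V -> R) : Prop :=
  [/\ is_measure mu,
      (forall x k, gmeasure mu (gball x k) < +oo)%E
    & (doubling_const mu < +oo)%E].

Definition graph_doubling_const : \bar R :=
  ereal_inf [set doubling_const mu | mu in doubling].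

Definition DM : set (V -> R) :=
  [set mu | doubling mu /\ doubling_const mu = graph_doubling_const].

End Graph.

Definition convex_cone (V : Type) (R : realType) (S : set (V -> R)) : Prop :=
  (forall mu (l : R), S mu -> 0 < l -> S (fun v => l * mu v)) /\
  (forall mu nu (t : R), S mu -> S nu -> 0 <= t <= 1 ->
      S (fun v => t * mu v + (1 - t) * nu v)).

(* Main.v *)
Require Import Defs.
From HB Require Import structures.
From mathcomp Require Import all_boot all_order all_algebra.
From mathcomp Require Import all_classical all_reals.
From mathcomp Require Import ereal esum.
From mathcomp Require Import topology normedtype sequences.
From mathcomp Require Import finmap.
Import Order.TTheory GRing.Theory Num.Theory.
Import numFieldNormedType.Exports.
Local Open Scope classical_set_scope.
Local Open Scope ring_scope.
Set Implicit Arguments. Unset Strict Implicit. Unset Printing Implicit Defensive.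


Section GraphFacts.
Variables (V : Type) (adj : V -> V -> Prop).
Hypothesis symm : forall x y, adj x y -> adj y x.
Hypothesis conn : connected_graph adj.

Lemma gdistP x y : walk adj (gdist adj x y) x y /\
  forall m, walk adj m x y -> (gdist adj x y <= m)%N.
Proof.
rewrite /gdist; set P := [set n | _]; suff: exists n, P n by move/(xgetPex 0%N).
have [n0 w0] := conn x y.
have ex : exists n, `[< walk adj n x y >] by exists n0; apply/asboolP.
case: (ex_minnP ex) => n /asboolP wn minn; exists n; split => // m wm.
by apply: minn; apply/asboolP.
Qed.

Lemma gdist_le x y m : walk adj m x y -> (gdist adj x y <= m)%N.
Proof. by move=> w; apply: (gdistP x y).2. Qed.

Lemma gball0 x : gball adj x 0 = [set x].
Proof.
apply/seteqP; split => y /=.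
  rewrite /gball /= leqn0 => /eqP d0; have [w _] := gdistP x y.
  rewrite d0 in w; by inversion w.
move=> ->; rewrite /gball /=; apply: gdist_le; exact: walk0.
Qed.

Lemma gball_center x r : gball adj x r x.
Proof. rewrite /gball /=; exact: leq_trans (gdist_le (walk0 adj x)) (leq0n r). Qed.

Lemma gball1_adj x z : adj x z -> gball adj x 1 z.
Proof. move=> a; apply: gdist_le; apply: walkS a (walk0 _ _). Qed.

Lemma gballS x r y : gball adj x r.+1 y ->
  y = x \/ exists z, adj x z /\ gball adj z r y.
Proof.
rewrite /gball /= => le; have [w _] := gdistP x y.
move: w le; set m := gdist adj x y => w.
inversion w; first by left.
move=> le; right; exists z; split => //.
exact: leq_trans (gdist_le H1) _.
Qed.

End GraphFacts.


Section Meas.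
Variables (V : Type) (adj : V -> V -> Prop) (R : realType).
Hypothesis symm : forall x y, adj x y -> adj y x.
Hypothesis conn : connected_graph adj.

Local Notation gm := (@gmeasure V R).

Lemma gm_sub (mu : V -> R) A B : (forall v, 0 <= mu v) -> A `<=` B -> (gm mu A <= gm mu B)%E.
Proof.
move=> mu0 AB; rewrite /gmeasure; apply: ge_ereal_sup => _ [X [finX XA] <-].
apply: esum_ge; exists X => //; split => //; exact: subset_trans AB.
Qed.

Lemma gm_fin (mu : V -> R) A : (forall v, 0 <= mu v) -> finite_set A ->
  gm mu A = (\sum_(v <- finmap.enum_fset (fset_set (A : set {classic V}))) mu v)%:E.
Proof.
move=> mu0 fA; rewrite /gmeasure esum_fset //; last by move=> i _; rewrite lee_fin.
by rewrite fsumEFin // fsbig_finite.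
Qed.

Lemma gm_set1 (mu : V -> R) x : 0 <= mu x -> gm mu [set x] = (mu x)%:E.
Proof. by move=> h; rewrite /gmeasure esum_set1 // lee_fin. Qed.

Lemma gm_ge0 (mu : V -> R) A : (forall v, 0 <= mu v) -> (0 <= gm mu A)%E.
Proof. by move=> h; apply: esum_ge0 => x _; rewrite lee_fin. Qed.

Lemma gm_fine (mu : V -> R) A : (forall v, 0 <= mu v) -> (gm mu A < +oo)%E ->
  gm mu A = (fine (gm mu A))%:E.
Proof. by move=> h fin; rewrite fineK // ge0_fin_numE // gm_ge0. Qed.

Definition gratio (mu : V -> R) x k :=
  fine (gm mu (gball adj x (2 * k).+1)) / fine (gm mu (gball adj x k)).

Lemma ratio_ub mu x k : ((gratio mu x k)%:E <= doubling_const adj mu)%E.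
Proof. by apply: ereal_sup_ubound; exists x => //; exists k. Qed.

Lemma pos_ge0 (mu : V -> R) : is_measure mu -> forall v, 0 <= mu v.
Proof. by move=> h v; apply: ltW. Qed.

Lemma adj_le mu c : is_measure mu -> (forall x k, gm mu (gball adj x k) < +oo)%E ->
  (doubling_const adj mu <= c%:E)%E -> forall x z, adj x z -> mu z <= c * mu x.
Proof.
move=> mp fb dc x z axz.
have r := le_trans (ratio_ub mu x 0) dc; rewrite lee_fin /gratio muln0 gball0 // in r.
rewrite gm_set1 ?pos_ge0 //= ler_pdivrMr // in r; apply: le_trans r.
have := gm_sub (pos_ge0 mp) (_ : [set z] `<=` gball adj x 1).
rewrite gm_set1 ?pos_ge0 // (gm_fine (pos_ge0 mp) (fb x 1)) lee_fin; apply.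
by move=> y ->; apply: gball1_adj.
Qed.

Lemma walk_le mu c : is_measure mu -> (forall x k, gm mu (gball adj x k) < +oo)%E ->
  (doubling_const adj mu <= c%:E)%E -> forall n x y, walk adj n x y ->
  mu y <= c ^+ n * mu x /\ mu x <= c ^+ n * mu y.
Proof.
move=> mp fb dc n x y; elim => {n x y} [x|n x z y axz w [IH1 IH2]]; first by rewrite expr0 !mul1r.
have h1 := adj_le mp fb dc axz; have h2 := adj_le mp fb dc (symm axz).
have c0 : 0 <= c.
  have : 0 < c * mu x by apply: lt_le_trans h1.
  by rewrite pmulr_lgt0 // => /ltW.
split.
  by apply: le_trans IH1 _; rewrite exprSr -mulrA ler_wpM2l ?exprn_ge0.
by apply: le_trans h2 _; rewrite exprS -mulrA ler_wpM2l.
Qed.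


Lemma ball1_le mu c : is_measure mu -> (forall x k, gm mu (gball adj x k) < +oo)%E ->
  (doubling_const adj mu <= c%:E)%E -> forall x, fine (gm mu (gball adj x 1)) <= c * mu x.
Proof.
move=> mp fb dc x.
have r := le_trans (ratio_ub mu x 0) dc; rewrite lee_fin /gratio muln0 gball0 // in r.
by rewrite gm_set1 ?pos_ge0 //= ler_pdivrMr // in r.
Qed.

Lemma nbr_finite mu c : is_measure mu -> (forall x k, gm mu (gball adj x k) < +oo)%E ->
  (doubling_const adj mu <= c%:E)%E -> 0 < c -> forall x, finite_set [set y | adj x y].
Proof.
move=> mp fb dc c0 x; apply: contrapT => inf.
have [B BN nB] := @infinite_set_fset {classic V} [set y | adj x y] (Num.bound (c * c)) inf.
have h1 : \sum_(v <- finmap.enum_fset B) mu v <= c * mu x.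
  apply: le_trans (ball1_le mp fb dc x).
  have := gm_sub (pos_ge0 mp) (_ : [set` B] `<=` gball adj x 1).
  rewrite (gm_fine (pos_ge0 mp) (fb x 1)) (gm_fin (pos_ge0 mp) (finite_fset B)) set_fsetK lee_fin; apply.
  by move=> y /BN; apply: gball1_adj.
have h2 : \sum_(v <- finmap.enum_fset B) (mu x / c) <= \sum_(v <- finmap.enum_fset B) mu v.
  rewrite big_seq [X in _ <= X]big_seq; apply: ler_sum => v vB.
  rewrite ler_pdivrMr // mulrC; apply: (adj_le mp fb dc); apply: symm; exact: BN.
rewrite big_const_seq count_predT iter_addr_0 in h2.
have h := le_trans h2 h1; set n := size _ in h nB.
have hn : c * c < n%:R.
  apply: lt_le_trans (archi_boundP _) _; first by rewrite mulr_ge0 // ltW.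
  by rewrite ler_nat.
have a0 := mp x.
rewrite -mulr_natr mulrAC ler_pdivrMr // in h.
have : n%:R * mu x <= (c * c) * mu x by rewrite mulrC; apply: le_trans h _; rewrite mulrAC.
by rewrite ler_pM2r //; apply/negP; rewrite -ltNge.
Qed.

Lemma ball_finite : (forall x, finite_set [set y | adj x y]) ->
  forall r x, finite_set (gball adj x r).
Proof.
move=> NF; elim => [|r IH] x; first by rewrite gball0 //; exact: finite_set1.
apply: (@sub_finite_set _ _ ([set x] `|` \bigcup_(z in [set y | adj x y]) gball adj z r)).
  by move=> y /(gballS conn) [->|[z [a b]]]; [left|right; exists z].
by rewrite finite_setU; split; [exact: finite_set1|apply: bigcup_finite].
Qed.

End Meas.


Section Sums.
Variables (V : Type) (adj : V -> V -> Prop) (R : realType).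
Hypothesis symm : forall x y, adj x y -> adj y x.
Hypothesis conn : connected_graph adj.
Hypothesis BF : forall x r, finite_set (gball adj x r).

Local Notation gm := (@gmeasure V R).

Definition ms (mu : V -> R) x r :=
  \sum_(v <- finmap.enum_fset (fset_set (gball adj x r : set {classic V}))) mu v.

Lemma gm_ball (mu : V -> R) (h : forall v, 0 <= mu v) x r : gm mu (gball adj x r) = (ms mu x r)%:E.
Proof. by rewrite gm_fin. Qed.

Lemma ms_ge (mu : V -> R) x r : is_measure mu -> mu x <= ms mu x r.
Proof.
move=> mp; have := gm_sub (pos_ge0 mp) (_ : [set x] `<=` gball adj x r).
rewrite gm_set1 ?pos_ge0 // (gm_ball (pos_ge0 mp)) lee_fin; apply.
by move=> y ->; apply: gball_center.
Qed.

Lemma ms_pos (mu : V -> R) x r : is_measure mu -> 0 < ms mu x r.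
Proof. by move=> mp; apply: lt_le_trans (mp x) (ms_ge _ _ mp). Qed.

Lemma ratio_ms (mu : V -> R) (h : forall v, 0 <= mu v) x k :
  gratio adj mu x k = ms mu x (2 * k).+1 / ms mu x k.
Proof. by rewrite /gratio !(gm_ball h). Qed.

Lemma dcE (mu : V -> R) : doubling_const adj mu =
  ereal_sup [set (gratio adj mu x k)%:E | x in [set: V] & k in [set: nat]].
Proof. by []. Qed.

Lemma DC (mu : V -> R) c : is_measure mu ->
  (forall x k, ms mu x (2 * k).+1 <= c * ms mu x k) ->
  doubling adj mu /\ (doubling_const adj mu <= c%:E)%E.
Proof.
move=> mp h.
have dc : (doubling_const adj mu <= c%:E)%E.
  rewrite dcE; apply: ge_ereal_sup => _ [x _ [k _ <-]].
  by rewrite lee_fin (ratio_ms (pos_ge0 mp)) ler_pdivrMr ?ms_pos.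
split => //; split => //; last by apply: le_lt_trans dc (ltry _).
by move=> x k; rewrite (gm_ball (pos_ge0 mp)) ltry.
Qed.

Lemma DU (mu : V -> R) c : doubling adj mu -> (doubling_const adj mu <= c%:E)%E ->
  forall x k, ms mu x (2 * k).+1 <= c * ms mu x k.
Proof.
move=> [mp _ _] dc x k; have := le_trans (ratio_ub adj mu x k) dc.
by rewrite lee_fin (ratio_ms (pos_ge0 mp)) ler_pdivrMr ?ms_pos.
Qed.

Lemma msZ (mu : V -> R) l x r : ms (fun v => l * mu v) x r = l * ms mu x r.
Proof. by rewrite /ms mulr_sumr. Qed.

Lemma msC (mu nu : V -> R) t x r :
  ms (fun v => t * mu v + (1 - t) * nu v) x r = t * ms mu x r + (1 - t) * ms nu x r.
Proof. by rewrite /ms big_split /= !mulr_sumr. Qed.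

Lemma scaleP (mu : V -> R) l : doubling adj mu -> 0 < l ->
  doubling adj (fun v => l * mu v) /\
  doubling_const adj (fun v => l * mu v) = doubling_const adj mu.
Proof.
move=> [mp fb dcf] l0.
have mp' : is_measure (fun v => l * mu v) by move=> v; rewrite mulr_gt0.
have eq : doubling_const adj (fun v => l * mu v) = doubling_const adj mu.
  rewrite !dcE; congr ereal_sup; apply/seteqP; split => _ [x _ [k _ <-]];
    exists x => //; exists k => //;
    rewrite (ratio_ms (pos_ge0 mp)) (ratio_ms (pos_ge0 mp')) !msZ invfM mulrACA divff ?mul1r // gt_eqF //.
split => //; split => //.
- by move=> x k; rewrite (gm_ball (pos_ge0 mp')) ltry.
- by rewrite eq.
Qed.

Lemma convP (mu nu : V -> R) t c : doubling adj mu -> doubling adj nu ->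
  (doubling_const adj mu <= c%:E)%E -> (doubling_const adj nu <= c%:E)%E ->
  0 <= t <= 1 ->
  doubling adj (fun v => t * mu v + (1 - t) * nu v) /\
  (doubling_const adj (fun v => (t * mu v + (1 - t) * nu v)%R) <= c%:E)%E.
Proof.
move=> dm dn cm cn /andP[t0 t1].
have [mp _ _] := dm; have [np _ _] := dn.
apply: DC.
  move=> v; have [t1'|] := ltP t 1.
    apply: ltr_pwDr; first by rewrite mulr_gt0 // subr_gt0.
    by rewrite mulr_ge0 // ltW.
  move=> t1''; have -> : t = 1 by apply/eqP; rewrite eq_le t1 t1''.
  by rewrite subrr mul0r addr0 mul1r.
move=> x k; rewrite !msC mulrDr; apply: lerD; rewrite mulrCA; apply: ler_wpM2l.
- by [].
- exact: DU.
- by rewrite subr_ge0.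
- exact: DU.
Qed.

End Sums.


Section Main.
Variables (V : Type) (adj : V -> V -> Prop) (R : realType).
Hypothesis symm : forall x y, adj x y -> adj y x.
Hypothesis conn : connected_graph adj.
Local Notation W := {classic V}.

Lemma sum_cvg (G : set_system {ptws W -> R}) (mu : {ptws W -> R}) (s : seq W) :
  ProperFilter G -> G --> mu ->
  (fun f : {ptws W -> R} => \sum_(v <- s) f v) @ G --> \sum_(v <- s) mu v.
Proof.
move=> PG Gmu.
apply: cvg_big => //; first exact: add_continuous.
move=> i _.
have h := @proj_continuous _ (fun _ : W => R) i mu.
by apply: cvg_trans h; apply: cvg_app.
Qed.

Lemma empty_dc (mu : V -> R) : (forall x : V, False) ->
  doubling_const adj mu = -oo%E /\ doubling adj mu.
Proof.
move=> e; have d : doubling_const adj mu = -oo%E.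
  rewrite dcE (_ : [set _ | _ in _ & _ in _] = set0) ?ereal_sup0 //.
  by apply/seteqP; split => // y [x]; case: (e x).
split => //; split.
- by move=> v; case: (e v).
- by move=> x; case: (e x).
- by rewrite d.
Qed.

Lemma exists_doubling : (graph_doubling_const adj R < +oo)%E ->
  exists nu : V -> R, doubling adj nu.
Proof.
move=> H; apply: contrapT => nex; move: H.
rewrite /graph_doubling_const (_ : [set _ | _ in _] = set0) ?ereal_inf0 //.
by apply/seteqP; split => // y [nu dn _]; apply: nex; exists nu.
Qed.

Lemma BF_of (nu : V -> R) : doubling adj nu -> forall x r, finite_set (gball adj x r).
Proof.
move=> [mp fb dc].
pose c := Num.max 1 (fine (doubling_const adj nu)).
have dcc : (doubling_const adj nu <= c%:E)%E.
  rewrite /c; move: dc; case: (doubling_const adj nu) => [r||] //= _; last exact: leNye.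
  by rewrite lee_fin le_max lexx orbT.
have c0 : 0 < c by rewrite lt_max ltr01.
by move=> x r; exact: ball_finite conn (nbr_finite symm conn mp fb dcc c0) r x.
Qed.

Section WithBF.
Hypothesis BF : forall x r, finite_set (gball adj x r).

Lemma dc_ge1 (nu : V -> R) (o : V) : doubling adj nu -> (1 <= doubling_const adj nu)%E.
Proof.
move=> dn; have [mp _ _] := dn.
apply: le_trans (ratio_ub adj nu o 0).
have p : 0 < ms adj nu o 0 by apply: ms_pos.
rewrite lee_fin (ratio_ms BF (pos_ge0 mp)) ler_pdivlMr // mul1r muln0.
have := gm_sub (pos_ge0 mp) (_ : gball adj o 0 `<=` gball adj o 1).
rewrite !(gm_ball BF (pos_ge0 mp)) lee_fin; apply.
by move=> y; rewrite /gball /= => h; apply: leq_trans h _.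
Qed.


Lemma exists_DM (o : V) : (graph_doubling_const adj R < +oo)%E ->
  exists mu : V -> R, DM adj mu.
Proof.
move=> CGf.
have CG1 : (1 <= graph_doubling_const adj R)%E.
  by apply: le_ereal_inf_tmp => _ [nu dn <-]; exact: dc_ge1 o dn.
set c := fine (graph_doubling_const adj R).
have CGc : graph_doubling_const adj R = c%:E.
  by rewrite /c fineK // ge0_fin_numE // (le_trans _ CG1).
have c1 : 1 <= c by rewrite -lee_fin -CGc.
have seqP : forall n : nat, exists mu : V -> R, doubling adj mu /\ (doubling_const adj mu < (c + harmonic n)%:E)%E.
  move=> n; have fin : graph_doubling_const adj R \is a fin_num by rewrite CGc.
  have [_ [mu dm <-] lt] := lb_ereal_inf_adherent (harmonic_gt0 n) fin.
  exists mu; split => //; move: lt.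
  by change (ereal_inf _) with (graph_doubling_const adj R); rewrite CGc.
have [mus hmus] := choice seqP.
pose nu n v := (mus n o)^-1 * mus n v.
have nuP n : doubling adj (nu n) /\ (doubling_const adj (nu n) < (c + harmonic n)%:E)%E.
  have [dm lt] := hmus n; have [mp _ _] := dm.
  have l0 : 0 < (mus n o)^-1 by rewrite invr_gt0.
  have [d e] := scaleP BF dm l0.
  by split => //; rewrite /nu e.
have nuo n : nu n o = 1.
  by rewrite /nu mulVf // gt_eqF //; have [[mp _ _] _] := hmus n; exact: mp.
pose C := c + 1.
have C1 : 1 <= C by rewrite /C lerDr (le_trans ler01 c1) //.
have C0 : 0 < C by apply: lt_le_trans C1.
have nuC n : (doubling_const adj (nu n) <= C%:E)%E.
  apply: le_trans (ltW (nuP n).2) _; rewrite lee_fin lerD2l /harmonic /=.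
  by rewrite invf_le1 // ler1n.
pose d v := gdist adj o v.
pose K (v : W) : set R := `[(C ^+ d v)^-1, C ^+ d v]%classic.
have Kc v : compact (K v) by apply: segment_compact.
have nuK n : forall v, K v (nu n v).
  move=> v; have [w _] := gdistP conn o v; have [[mp fb _] _] := nuP n.
  have [h1 h2] := walk_le symm conn mp fb (nuC n) w.
  rewrite nuo mulr1 in h1 h2.
  rewrite /K /= in_itv /=; apply/andP; split => //.
  by rewrite -[_^-1]mul1r ler_pdivrMr ?exprn_gt0 // mulrC.
pose P := [set f : {ptws W -> R} | forall v, K v (f v)].
have cP : compact P by apply: tychonoff.
pose F := (fun n => (nu n : {ptws W -> R})) @ \oo.
have FP : F P by exists 0%N => // n _; exact: nuK.
have [mu [Pmu clmu]] := cP F _ FP.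
rewrite cluster_cvgE in clmu.
have [G PG [Gmu FG]] := clmu.
have mupos : is_measure mu.
  move=> v; have := Pmu v; rewrite /K /= in_itv /= => /andP[h _]; apply: lt_le_trans h.
  by rewrite invr_gt0 exprn_gt0.
have key : forall x k N, ms adj mu x (2 * k).+1 <= (c + harmonic N) * ms adj mu x k.
  move=> x k N.
  pose u (f : {ptws W -> R}) := (c + harmonic N) * ms adj f x k - ms adj f x (2 * k).+1.
  have ev : \forall f \near G, 0 <= u f.
    apply: FG; exists N => // n /= Nn.
    rewrite /u subr_ge0.
    have [dn ltn] := nuP n.
    apply: le_trans (DU conn BF dn (ltW ltn) x k) _.
    apply: ler_wpM2r; first by apply: ltW; apply: ms_pos => //; have [] := dn.
    by rewrite lerD2l /harmonic /= lef_pV2 ?posrE // ler_nat.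
  have cv : u f @[f --> G] --> (c + harmonic N) * ms adj mu x k - ms adj mu x (2 * k).+1.
    apply: (@cvgB _ _ _ _ PG (fun f : {ptws W -> R} => (c + harmonic N) * ms adj f x k) (fun f : {ptws W -> R} => ms adj f x (2 * k).+1)). 
      by apply: (cvgMl_tmp (F := G) (g := fun f : {ptws W -> R} => ms adj f x k)); exact: sum_cvg.
    exact: sum_cvg.
  have := closed_cvg [set r : R | 0 <= r] (@closed_ge R 0) ev _ cv.
  by move=> /(_ PG) h; rewrite -subr_ge0; exact: h.
have key2 : forall x k, ms adj mu x (2 * k).+1 <= c * ms adj mu x k.
  move=> x k.
  have cvh : (c + harmonic N) * ms adj mu x k @[N --> \oo] --> c * ms adj mu x k.
    have -> : c * ms adj mu x k = (c + 0) * ms adj mu x k by rewrite addr0.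
    apply: (cvgMr_tmp (F := \oo) (f := fun N : nat => c + harmonic N)).
    apply: (cvgD (F := \oo) (f := fun _ : nat => c) (g := fun N : nat => harmonic N)); [exact: cvg_cst | exact: cvg_harmonic].
  apply: (closed_cvg [set r : R | ms adj mu x (2 * k).+1 <= r] (@closed_ge R _) _ _ cvh).
  by exists 0%N => // N _; exact: key.
have [dmu dcmu] := DC conn BF mupos key2.
exists mu; split => //; apply/eqP; rewrite eq_le; apply/andP; split.
  by rewrite CGc.
by apply: ereal_inf_lbound; exists mu.
Qed.

End WithBF.
End Main.

Unset Implicit Arguments.

Theorem proposition2p2 (R : realType) (V : Type) (adj : V -> V -> Prop) :
  simple_graph adj -> connected_graph adj ->
  (graph_doubling_const adj R < +oo)%E ->
  @DM V adj R !=set0 /\ convex_cone (@DM V adj R).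
Proof.
move=> [symm _] conn H.
have [nu0 dnu0] := exists_doubling H.
have BF := BF_of symm conn dnu0.
split.
  case: (pselect (exists o : V, True)) => [[o _]|ne].
    have [mu hmu] := exists_DM symm conn BF o H.
    by exists mu.
  have e : forall x : V, False by move=> x; apply: ne; exists x.
  exists (fun _ => 1 : R).
  have [d1 dd] := empty_dc adj (fun _ : V => 1 : R) e.
  split => //; apply/eqP; rewrite eq_le; apply/andP; split; first by rewrite d1 leNye.
  by apply: ereal_inf_lbound; exists (fun _ => 1 : R).
split.
  move=> mu l [dm em] l0; have [d e] := scaleP BF dm l0.
  by split => //; rewrite e em.
move=> mu nu t [dm em] [dn en] t01.
case: (pselect (exists o : V, True)) => [[o _]|ne]; last first.
  have e : forall x : V, False by move=> x; apply: ne; exists x.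
  have [d1 dd] := empty_dc adj (fun v => t * mu v + (1 - t) * nu v) e.
  have [d2 _] := empty_dc adj mu e.
  by split => //; rewrite d1 -em d2.
have rb := ratio_ub adj mu o 0.
move: em en rb; case E: (graph_doubling_const adj R) => [c||] em en rb.
- have cm : (doubling_const adj mu <= c%:E)%E by rewrite em.
  have cn : (doubling_const adj nu <= c%:E)%E by rewrite en.
  have [dr cr] := convP conn BF dm dn cm cn t01.
  split => //; apply/eqP; rewrite eq_le E cr /= -E.
  by apply: ereal_inf_lbound; exists (fun v => t * mu v + (1 - t) * nu v).
- by rewrite E in H.
- rewrite em in rb.
  by have := lt_le_trans (ltNyr (gratio adj mu o 0)) rb; rewrite ltxx.
Qed.
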